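(* Let $k\ge2$ and $n<0$, and write $q=q_{n,k}$, $r=r_{n,k}$. Every monomial occurring in $\mathcal{F}_{n,k}(x)$ has exponent at least $r$, and the coefficient of $x^r$ in $\mathcal{F}_{n,k}(x)$ equals $(-1)^r\binom{q}{r}$, with $\binom{q}{r}=0$ when $q<r$. In particular, if $q\ge r$ then $\mathcal{F}_{n,k}(x)$ is not identically zero, and its lowest-degree term is $(-1)^r\binom{q}{r}x^r$.
   Context: For $k\ge2$, the polynomials $\mathcal{F}_{n,k}(x)\in\mathbb{Z}[x]$ ($n\in\mathbb{Z}$) are defined by $\mathcal{F}_{1,k}=1$, $\mathcal{F}_{n,k}=0$ for $n=0,-1,\dots,-(k-2)$, and $\mathcal{F}_{n,k}(x)=\sum_{j=1}^{k}x^{k-j}\mathcal{F}_{n-j,k}(x)$ for all $n\in\mathbb{Z}$. This recurrence is used upwards for $n\ge2$, and downwards for $n\le-(k-1)$ as $\mathcal{F}_{n,k}=\mathcal{F}_{n+k,k}-\sum_{j=1}^{k-1}x^j\mathcal{F}_{n+j,k}$. For $n\le0$, set $q_{n,k}=\lfloor(|n|+1)/k\rfloor$ and let $r_{n,k}\in\{0,\dots,k-1\}$ be the residue of $|n|+1$ modulo $k$. Then $|n|+1=kq_{n,k}+r_{n,k}$. *)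

(* Defs.v *)
From HB Require Import structures.
From mathcomp Require Import all_boot all_order all_algebra.
Set Implicit Arguments. Unset Strict Implicit. Unset Printing Implicit Defensive.
Import Order.TTheory GRing.Theory Num.Theory.
Local Open Scope ring_scope.

(* [is_Fseq k F] : F : int -> {poly int} is the family (F_{n,k})_{n in Z}
   defined in the paper: F_{1,k} = 1, F_{n,k} = 0 for -(k-2) <= n <= 0,
   and F_{n,k} = sum_{j=1}^k x^(k-j) F_{n-j,k} for all n in Z.
   (Since the coefficient of F_{n-k,k} is x^0 = 1, these conditions determine
   F uniquely, both upwards and downwards.) *)
Definition is_Fseq (k : nat) (F : int -> {poly int}) : Prop :=
  [/\ F 1 = 1,
      (forall n : int, - (k%:Z - 2) <= n <= 0 -> F n = 0) &
      (forall n : int, F n = \sum_(1 <= j < k.+1) 'X^(k - j) * F (n - j%:Z))].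

(* Main.v *)
Require Import Defs.
From HB Require Import structures.
From mathcomp Require Import all_boot all_order all_algebra.
From mathcomp Require Import zify ring.
Import Order.TTheory GRing.Theory Num.Theory.
Local Open Scope ring_scope.

Lemma rec_sum (k : nat) (F : int -> {poly int}) :
  (forall n : int, F n = \sum_(1 <= j < k.+1) 'X^(k - j) * F (n - j%:Z)) ->
  forall m : int, F (m + k%:Z) = \sum_(i < k) 'X^i * F (m + i%:Z).
Proof.
move=> hrec m; rewrite hrec big_add1 /= big_mkord (reindex_inj rev_ord_inj) /=.
apply: eq_bigr => i _; have hi := ltn_ord i.
have -> : (k - (k - i.+1).+1)%N = i by lia.
congr (_ * F _); lia.
Qed.

Lemma rec2 (k : nat) (F : int -> {poly int}) : (1 <= k)%N ->
  (forall n : int, F n = \sum_(1 <= j < k.+1) 'X^(k - j) * F (n - j%:Z)) ->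
  forall m : int, F m = F (m + k%:Z) + 'X^k * F (m + k%:Z) - 'X * F (m + k%:Z + 1).
Proof.
move=> hk hrec m; have hs := @rec_sum k F hrec.
case: k hk hrec hs => // k _ hrec hs.
have e1 := hs m; have e2 := hs (m + 1).
rewrite big_ord_recl /= in e1; rewrite big_ord_recr /= in e2.
have -> : m + k.+1%:Z + 1 = m + 1 + k.+1%:Z by lia.
rewrite e2 mulrDr.
rewrite expr0 mul1r addr0 in e1.
have -> : m + 1 + k%:Z = m + k.+1%:Z by lia.
rewrite mulrA -exprS e1.
have -> : 'X * (\sum_(i < k) 'X^i * F (m + 1 + i%:Z)) = \sum_(i < k) 'X^(bump 0 i) * F (m + bump 0 i).
  rewrite mulr_sumr; apply: eq_bigr => i _.
  rewrite mulrA -exprS /bump /=; congr (_ * F _); lia.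
ring.
Qed.

Lemma mainL (k : nat) (F : int -> {poly int}) : (2 <= k)%N -> is_Fseq k F ->
  forall q r, (r < k)%N ->
  (forall i, (i < r)%N -> (F (1 - (q * k + r)%N%:Z))`_i = 0) /\
  (F (1 - (q * k + r)%N%:Z))`_r = (-1) ^+ r * ('C(q, r))%:R.
Proof.
move=> hk [h1 h0 hrec]; have hr2 := @rec2 k F (ltnW hk) hrec.
elim=> [|q IH] r hr.
  case: r hr => [|r] hr.
    have -> : 1 - (0 * k + 0)%N%:Z = 1 by lia.
    by rewrite h1 coefC.
  rewrite h0; last by lia.
  by rewrite coef0 bin0n mulr0; split => // i _; rewrite coef0.
rewrite hr2.
have -> : 1 - (q.+1 * k + r)%N%:Z + k%:Z = 1 - (q * k + r)%N%:Z by lia.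
have [IH1 IH2] := IH r hr.
case: r hr IH1 IH2 => [|r] hr IH1 IH2.
  split => // .
  rewrite coefB coefD coefXnM coefXM /= (ltn_trans _ hk) // IH2 !bin0 addr0 subr0.
  done.
have -> : 1 - (q * k + r.+1)%N%:Z + 1 = 1 - (q * k + r)%N%:Z by lia.
have [IH3 IH4] := IH r (ltnW hr).
split.
  move=> i hi; rewrite coefB coefD coefXnM coefXM (ltn_trans hi hr) IH1 //.
  case: i hi => [|i] hi //=; rewrite IH3 //; lia.
rewrite coefB coefD coefXnM coefXM hr IH2 /= IH4 binS natrD exprS; ring.
Qed.

Lemma negE (n : int) : n < 0 -> n = 1 - (`|n|%N + 1)%N%:Z.
Proof. by case: n => // m _; rewrite NegzE /=; lia. Qed.

Lemma t1 (k : nat) (n : int) : n < 0 -> n = 1 - (((`|n|%N + 1) %/ k)%N * k + ((`|n|%N + 1) %% k)%N)%N%:Z.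
Proof. move=> hn. rewrite -divn_eq; exact: negE. Qed.

Lemma final (k : nat) (F : int -> {poly int}) (n : int) (q r : nat) :
  (2 <= k)%N -> is_Fseq k F -> (r < k)%N -> n = 1 - (q * k + r)%N%:Z ->
  [/\ (forall i : nat, (i < r)%N -> (F n)`_i = 0),
      (F n)`_r = (-1) ^+ r * ('C(q, r))%:R &
      ((r <= q)%N -> F n != 0 /\ (F n)`_r != 0)].
Proof.
move=> hk hF hrk en.
have [A B] := @mainL k F hk hF q r hrk; rewrite -en in A B.
have C : (r <= q)%N -> (F n)`_r != 0.
  move=> hrq; rewrite B mulf_neq0 ?signr_eq0 //.
  by rewrite pnatr_eq0 -lt0n bin_gt0.
split => // hrq; split; last exact: C.
apply/negP => /eqP h; move: (C hrq); by rewrite h coef0 eqxx.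
Qed.

Theorem mainTheorem5 (k : nat) (F : int -> {poly int}) (n : int) :
  (2 <= k)%N -> is_Fseq k F -> n < 0 ->
  let q := ((`|n|%N + 1) %/ k)%N in
  let r := ((`|n|%N + 1) %% k)%N in
  [/\ (forall i : nat, (i < r)%N -> (F n)`_i = 0),
      (F n)`_r = (-1) ^+ r * ('C(q, r))%:R &
      ((r <= q)%N -> F n != 0 /\ (F n)`_r != 0)].
Proof.
move=> hk hF hn q r.
apply: (@final k F n q r hk hF); first by rewrite /r ltn_mod (ltn_trans _ hk).
by rewrite /q /r; exact: t1.
Qed.
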